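(* Let $x\neq0$ be represented by a tensor network on graph $G$ with $n$ vertices, and let $0\le\varepsilon_i\le\varepsilon$. Define $x^{(0)}=x$ and, for $i=1,\dots,n$: take a tensor network $(G,\mathbf C^{(1)},\dots,\mathbf C^{(n)})$ representing $x^{(i-1)}$ which is in canonical form centered at $v_i$, replace $\mathbf C^{(i)}$ by $\mathbf C^{(i)}+\delta^{(i)}$ with $\|\delta^{(i)}\|_F\le\varepsilon_i\|\mathbf C^{(i)}\|_F$, and let $x^{(i)}$ be the vectorized contraction of the resulting network. Then $\hat x=x^{(n)}$ satisfies $$\frac{\|\hat x-x\|_2}{\|x\|_2}\le n\varepsilon+O(\varepsilon^2)\quad(\varepsilon\to0).$$
   Context: Tensor network setup: A tensor network $(G,\mathbf T^{(1)},\dots,\mathbf T^{(n)})$ consists of a multigraph $G$ with vertices $v_1,\dots,v_n$, whose edges are either edges between distinct vertices (contracted legs) or self-loops (uncontracted legs), each edge having a dimension, and tensors $\mathbf T^{(j)}$ at $v_j$ with one mode per incident edge. Its contraction $\mathscr T_G(\mathbf T^{(1)},\dots,\mathbf T^{(n)})$ is obtained by summing over all contracted-edge indices the product of the entries of all $\mathbf T^{(j)}$. The environment matrix $M_{\mathbf T^{(j)}}$ of site $j$ is the matrix of the linear map $X\mapsto\mathrm{vec}(\mathscr T_G(\mathbf T^{(1)},\dots,X,\dots,\mathbf T^{(n)}))$ ($X$ in slot $j$) acting on $\mathrm{vec}(X)$. The network is in canonical form centered at $v_j$ if $M_{\mathbf T^{(j)}}$ is an isometry ($M^*M=I$). It is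 assumed that at every step such a canonical representation exists. *)

(* Defs.v *)
From HB Require Import structures.
From mathcomp Require Import all_boot all_order all_algebra.
Set Implicit Arguments. Unset Strict Implicit. Unset Printing Implicit Defensive.
Import Order.TTheory GRing.Theory Num.Theory.
Local Open Scope ring_scope.

(* A tensor network on a multigraph G with vertices 'I_n (v_1..v_n = 0..n-1),
   edges indexed by a finite type E, endpoints [ends e] (a self-loop, i.e.
   an uncontracted leg, when both endpoints coincide) and dimensions [d e]. *)
Section TensorNetwork.
Variables (C : numClosedFieldType) (n : nat) (E : finType)
          (ends : E -> 'I_n * 'I_n) (d : E -> nat).

Definition is_loop (e : E) : bool := (ends e).1 == (ends e).2.
Definition incident (j : 'I_n) (e : E) : bool :=
  ((ends e).1 == j) || ((ends e).2 == j).

Definition FullIdx := {dffun forall e : E, 'I_(d e)}.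
Definition LocIdx (j : 'I_n) :=
  {dffun forall e : {e : E | incident j e}, 'I_(d (val e))}.
Definition OutIdx := {dffun forall e : {e : E | is_loop e}, 'I_(d (val e))}.

Definition tensor (j : 'I_n) := {ffun LocIdx j -> C}.
Definition network := forall j : 'I_n, tensor j.
Definition outTensor := {ffun OutIdx -> C}.

Definition restr (j : 'I_n) (f : FullIdx) : LocIdx j :=
  @finfun _ (fun e : {e : E | incident j e} => 'I_(d (val e)))
     (fun e => f (val e)).

Definition contract (T : network) : outTensor :=
  [ffun o : OutIdx =>
     \sum_(f : FullIdx | [forall e : {e : E | is_loop e}, f (val e) == o e])
        \prod_(j < n) T j (restr j f)].

Definition replace (T : network) (j : 'I_n) (X : tensor j) : network :=
  @dfwith _ tensor T j X.

Definition frob (j : 'I_n) (X : tensor j) : C :=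
  sqrtC (\sum_(l : LocIdx j) `|X l| ^+ 2).
Definition norm2 (y : outTensor) : C := sqrtC (\sum_(o : OutIdx) `|y o| ^+ 2).

(* The environment
   matrix of site j is the matrix of X |-> vec(contract (replace T j X)):
   column c is the image of the c-th standard basis tensor. *)
Definition env_mx (T : network) (j : 'I_n) : 'M[C]_(#|OutIdx|, #|LocIdx j|) :=
  \matrix_(r, c)
     contract (replace T ([ffun l => (l == enum_val c)%:R] : tensor j))
              (enum_val r).

Definition adjmx (p q : nat) (M : 'M[C]_(p, q)) : 'M[C]_(q, p) :=
  (map_mx Num.conj_op M)^T.

(* canonical form centered at v_j: the environment matrix is an isometry *)
Definition canonical_at (T : network) (j : 'I_n) : Prop :=
  adjmx (env_mx T j) *m env_mx T j = 1%:M.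

Definition tn_step (eps_j : C) (j : 'I_n) (x y : outTensor) : Prop :=
  exists (T : network) (delta : tensor j),
    [/\ contract T = x, canonical_at T j,
        frob delta <= eps_j * frob (T j)
      & y = contract (replace T (T j + delta))].

End TensorNetwork.

(* Main.v *)
Require Import Defs.
From HB Require Import structures.
From mathcomp Require Import all_boot all_order all_algebra.
From mathcomp Require Import ring.
Import Order.TTheory GRing.Theory Num.Theory.
Local Open Scope ring_scope.

Section Norms.
Variables (C : numClosedFieldType) (I : finType).

Definition N2 (f : I -> C) := \sum_i `|f i| ^+ 2.

Lemma N2_ge0 f : 0 <= N2 f.
Proof. by apply: sumr_ge0 => i _; apply: exprn_ge0. Qed.

Lemma CS (a b : I -> C) : (forall i, 0 <= a i) -> (forall i, 0 <= b i) ->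
  (\sum_i a i * b i) ^+ 2 <= (\sum_i a i ^+ 2) * (\sum_i b i ^+ 2).
Proof.
move=> a0 b0.
set A := \sum_i a i ^+ 2; set B := \sum_i b i ^+ 2; set S := \sum_i a i * b i.
have A0 : 0 <= A by apply: sumr_ge0 => i _; apply: exprn_ge0.
have B0 : 0 <= B by apply: sumr_ge0 => i _; apply: exprn_ge0.
have S0 : 0 <= S by apply: sumr_ge0 => i _; apply: mulr_ge0.
case: (eqVneq A 0) => [A00|Anz].
  have ai : forall i, a i = 0.
    move=> i; have := psumr_eq0P (fun i _ => exprn_ge0 2 (a0 i)) A00 (i:=i) isT.
    by move/eqP; rewrite expf_eq0 /= => /eqP.
  have -> : S = 0 by rewrite /S big1 // => i _; rewrite ai mul0r.
  by rewrite expr0n /= mulr_ge0.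
have Apos : 0 < A by rewrite lt_def Anz A0.
have key : 0 <= \sum_i (A * b i - S * a i) ^+ 2.
  apply: sumr_ge0 => i _; rewrite -realEsqr.
  by apply: rpredB; apply: rpredM; apply: ger0_real.
have E : \sum_i (A * b i - S * a i) ^+ 2 = A * (A * B - S ^+ 2).
  rewrite (eq_bigr (fun i => A ^+ 2 * b i ^+ 2 - (2 * A * S) * (a i * b i)
     + S ^+ 2 * a i ^+ 2)); last by move=> i _; ring.
  rewrite big_split /= sumrB -!mulr_sumr -/A -/B -/S; ring.
rewrite E in key. rewrite -subr_ge0.
by rewrite pmulr_rge0 in key.
Qed.

Lemma N2_tri (f g : I -> C) :
  sqrtC (N2 (fun i => f i + g i)) <= sqrtC (N2 f) + sqrtC (N2 g).
Proof.
set sa := sqrtC (N2 f); set sb := sqrtC (N2 g).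
have sa0 : 0 <= sa by rewrite sqrtC_ge0 N2_ge0.
have sb0 : 0 <= sb by rewrite sqrtC_ge0 N2_ge0.
have S0 : 0 <= \sum_i `|f i| * `|g i| by apply: sumr_ge0 => i _; apply: mulr_ge0.
have h1 : N2 (fun i => f i + g i) <= \sum_i (`|f i| + `|g i|) ^+ 2.
  apply: ler_sum => i _; apply: lerXn2r; rewrite ?qualifE /= ?addr_ge0 //.
  exact: ler_normD.
have h2 : \sum_i (`|f i| + `|g i|) ^+ 2
    = N2 f + N2 g + 2 * \sum_i `|f i| * `|g i|.
  rewrite (eq_bigr (fun i => `|f i| ^+ 2 + `|g i| ^+ 2 + 2 * (`|f i| * `|g i|)));
    last by move=> i _; ring.
  by rewrite !big_split /= -mulr_sumr.
have h3 : \sum_i `|f i| * `|g i| <= sa * sb.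
  rewrite -ler_sqr ?qualifE /= ?mulr_ge0 //.
  by rewrite exprMn /sa /sb !sqrtCK; apply: CS.
have h4 : N2 (fun i => f i + g i) <= (sa + sb) ^+ 2.
  apply: (le_trans h1); rewrite h2.
  have -> : (sa + sb) ^+ 2 = sa ^+ 2 + sb ^+ 2 + 2 * (sa * sb) by ring.
  rewrite /sa /sb !sqrtCK lerD2l ler_wpM2l //.
have e : sqrtC ((sa + sb) ^+ 2) = sa + sb by rewrite sqrCK // addr_ge0.
rewrite -e ler_sqrtC // ?qualifE /= ?N2_ge0 //.
by rewrite exprn_ge0 // addr_ge0.
Qed.

End Norms.
Arguments N2 {C I} f.
Arguments N2_tri {C I} f g.
Arguments N2_ge0 {C I} f.
Lemma sum_enum (C : numClosedFieldType) (T : finType) (F : T -> C) :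
  \sum_(x : T) F x = \sum_(r < #|T|) F (enum_val r).
Proof. exact: (reindex enum_val (onW_bij _ (enum_val_bij T))). Qed.

Section TN.
Variables (C : numClosedFieldType) (n : nat) (E : finType)
          (ends : E -> 'I_n * 'I_n) (d : E -> nat).

Local Notation network := (network C ends d).
Local Notation tensor := (tensor C ends d).
Local Notation outTensor := (outTensor C ends d).
Local Notation OutIdx := (OutIdx ends d).
Local Notation FullIdx := (FullIdx d).

Definition cond (o : OutIdx) (f : FullIdx) :=
  [forall e : {e : E | is_loop ends e}, f (val e) == o e].
Definition Prest (T : network) (j0 : 'I_n) (f : FullIdx) :=
  \prod_(j < n | j != j0) T j (restr ends j f).

Lemma contract_replace (T : network) j0 (X : tensor j0) o :
  contract (replace T X) o = \sum_(f | cond o f) X (restr ends j0 f) * Prest T j0 f.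
Proof.
rewrite ffunE; apply: eq_bigr => f _; rewrite (bigD1 j0) //=.
rewrite /replace dfwith_in; congr (_ * _); apply: eq_bigr => j hj.
by rewrite dfwith_out // eq_sym.
Qed.

Lemma contract_self (T : network) j0 o :
  contract T o = \sum_(f | cond o f) T j0 (restr ends j0 f) * Prest T j0 f.
Proof. by rewrite ffunE; apply: eq_bigr => f _; rewrite (bigD1 j0). Qed.

Lemma contract_replace_self (T : network) j0 :
  contract (replace T (T j0)) = contract T.
Proof. by apply/ffunP => o; rewrite contract_replace (contract_self _ j0). Qed.

Lemma contract_replaceD (T : network) j0 (X Y : tensor j0) :
  contract (replace T (X + Y)) = contract (replace T X) + contract (replace T Y).
Proof.
apply/ffunP => o; rewrite [RHS]ffunE !contract_replace -big_split /=.
by apply: eq_bigr => f _; rewrite ffunE mulrDl.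
Qed.

Definition vec {j} (X : tensor j) : 'cV[C]_#|LocIdx ends d j| :=
  \col_c X (enum_val c).

Lemma env_vec (T : network) j (X : tensor j) r :
  (env_mx T j *m vec X) r 0 = contract (replace T X) (enum_val r).
Proof.
rewrite mxE contract_replace.
under eq_bigr => c _ do rewrite !mxE contract_replace mulr_suml.
rewrite exchange_big /=; apply: eq_bigr => f _.
rewrite (bigD1 (enum_rank (restr ends j f))) //= big1.
  by rewrite !ffunE enum_rankK eqxx mul1r addr0 mulrC.
move=> c hc; rewrite !ffunE.
have -> : (restr ends j f == enum_val c) = false.
  apply/negbTE; apply: contra hc => /eqP ->; by rewrite enum_valK.
by rewrite !mul0r.
Qed.


Lemma sum_adj k (w : 'cV[C]_k) : \sum_r `|w r 0| ^+ 2 = (adjmx w *m w) 0 0.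
Proof. by rewrite mxE; apply: eq_bigr => r _; rewrite !mxE normCKC. Qed.

Lemma iso_norm (T : network) j (X : tensor j) : canonical_at T j ->
  N2 (fun o => contract (replace T X) o) = N2 (fun l => X l).
Proof.
move=> can; rewrite /N2 sum_enum [RHS]sum_enum.
set M := env_mx T j; set v := vec X.
transitivity (\sum_r `|(M *m v) r 0| ^+ 2).
  by apply: eq_bigr => r _; rewrite env_vec.
transitivity (\sum_c `|v c 0| ^+ 2); last by apply: eq_bigr => c _; rewrite mxE.
have adjM : adjmx (M *m v) = adjmx v *m adjmx M.
  by rewrite /adjmx map_mxM trmx_mul.
rewrite !sum_adj adjM -mulmxA (mulmxA (adjmx M)) can mul1mx.
done.
Qed.

Lemma norm2_replace (T : network) j (X : tensor j) : canonical_at T j ->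
  norm2 (contract (replace T X)) = frob X.
Proof. by move=> can; rewrite /norm2 /frob; have := @iso_norm T j X can; rewrite /N2 => ->. Qed.

Lemma step_bound e j (x y : outTensor) : tn_step e j x y ->
  norm2 (y - x) <= e * norm2 x.
Proof.
case=> T [delta [Tx can hd ->]].
have -> : contract (replace T (T j + delta)) - x = contract (replace T delta).
  by rewrite contract_replaceD (contract_replace_self T j) Tx addrC addKr.
by rewrite -Tx -(contract_replace_self T j) !norm2_replace.
Qed.

End TN.
Arguments step_bound {C n E ends d e j x y}.

Section Final.
Variables (C : numClosedFieldType).

Lemma poly_bound (e : C) (m : nat) : 0 <= e -> e <= 1 ->
  (1 + e) ^+ m <= 1 + m%:R * e + 3%:R ^+ m * e ^+ 2.
Proof.
move=> e0 e1; elim: m => [|m IH]; first by rewrite !expr0 mul0r addr0 mul1r lerDl exprn_ge0.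
have h1 : (1 + e) ^+ m.+1 <= (1 + e) * (1 + m%:R * e + 3%:R ^+ m * e ^+ 2).
  by rewrite exprS ler_wpM2l // addr_ge0.
apply: (le_trans h1).
have -> : (1 + e) * (1 + m%:R * e + 3%:R ^+ m * e ^+ 2) =
   1 + m.+1%:R * e + e ^+ 2 * (m%:R + 3%:R ^+ m + 3%:R ^+ m * e) by ring.
have -> : 1 + m.+1%:R * e + 3%:R ^+ m.+1 * e ^+ 2 =
   1 + m.+1%:R * e + e ^+ 2 * (3%:R ^+ m + 3%:R ^+ m + 3%:R ^+ m) by rewrite exprS; ring.
rewrite lerD2l ler_wpM2l ?exprn_ge0 //.
have p0 : (0 : C) <= 3%:R ^+ m by rewrite exprn_ge0 // ler0n.
rewrite lerD //; last by rewrite ler_piMr.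
rewrite lerD2r -natrX ler_nat; apply: ltnW; exact: ltn_expl.
Qed.

End Final.

Lemma norm2_ge0 (C : numClosedFieldType) (n : nat) (E : finType)
    (ends : E -> 'I_n * 'I_n) (d : E -> nat) (y : outTensor C ends d) :
  0 <= norm2 y.
Proof. by rewrite /norm2 sqrtC_ge0; apply: sumr_ge0 => i _; apply: exprn_ge0. Qed.
Arguments norm2_ge0 {C n E ends d} y.

Lemma norm2D (C : numClosedFieldType) (n : nat) (E : finType)
    (ends : E -> 'I_n * 'I_n) (d : E -> nat) (y z : outTensor C ends d) :
  norm2 (y + z) <= norm2 y + norm2 z.
Proof.
rewrite /norm2.
have -> : \sum_o `|(y + z) o| ^+ 2 = N2 (fun o => y o + z o).
  by apply: eq_bigr => o _; rewrite ffunE.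
exact: N2_tri.
Qed.
Arguments norm2D {C n E ends d} y z.

Theorem mainTheorem8 (C : numClosedFieldType) (n : nat) (E : finType)
    (ends : E -> 'I_n * 'I_n) (d : E -> nat) :
  exists (K eps0 : C), 0 < eps0 /\
    forall (eps : C) (epsi : 'I_n -> C) (xs : nat -> outTensor C ends d),
      0 <= eps <= eps0 ->
      (forall i, 0 <= epsi i <= eps) ->
      xs 0%N != 0 ->
      (exists T : network C ends d, contract T = xs 0%N) ->
      (forall i : 'I_n, tn_step (epsi i) i (xs i) (xs i.+1)) ->
      norm2 (xs n - xs 0%N) / norm2 (xs 0%N) <= n%:R * eps + K * eps ^+ 2.
Proof.
exists (3%:R ^+ n), 1; split; first exact: ltr01.
move=> eps epsi xs /andP[e0 e1] hei hx0 _ hstep.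
set a0 := norm2 (xs 0%N).
have a0pos : 0 < a0.
  rewrite /a0 /norm2 sqrtC_gt0 lt_def; apply/andP; split; last first.
    by apply: sumr_ge0 => i _; apply: exprn_ge0.
  apply: contra hx0 => /eqP H; apply/eqP/ffunP => o.
  have := psumr_eq0P (fun i _ => exprn_ge0 2 (normr_ge0 (xs 0%N i))) H (i:=o) isT.
  by move/eqP; rewrite expf_eq0 /= normr_eq0 ffunE => /eqP.
have a00 := ltW a0pos.
have claim : forall k, (k <= n)%N ->
    norm2 (xs k - xs 0%N) <= ((1 + eps) ^+ k - 1) * a0.
  elim=> [|k IH] hk.
    rewrite subrr expr0 subrr mul0r /norm2 big1 ?sqrtC0 // => o _.
    by rewrite ffunE normr0 expr0n.
  have hk' : (k < n)%N by [].
  have IHk := IH (ltnW hk').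
  set i := Ordinal hk'.
  have hs := step_bound (hstep i).
  have e_i : epsi i <= eps by case/andP: (hei i).
  have ei0 : 0 <= epsi i by case/andP: (hei i).
  have t1 : norm2 (xs k.+1 - xs 0%N)
      <= norm2 (xs k.+1 - xs k) + norm2 (xs k - xs 0%N).
    by have := norm2D (xs k.+1 - xs k) (xs k - xs 0%N); rewrite addrA subrK.
  have t2 : norm2 (xs k) <= norm2 (xs k - xs 0%N) + a0.
    by have := norm2D (xs k - xs 0%N) (xs 0%N); rewrite subrK.
  apply: (le_trans t1).
  have -> : ((1 + eps) ^+ k.+1 - 1) * a0 =
     eps * (((1 + eps) ^+ k - 1) * a0 + a0) + ((1 + eps) ^+ k - 1) * a0.
    by rewrite exprS; ring.
  apply: lerD => //.
  apply: (le_trans hs); rewrite /i /=.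
  apply: (le_trans (ler_wpM2r (norm2_ge0 _) e_i)).
  apply: ler_wpM2l => //.
  apply: (le_trans t2); exact: lerD.
rewrite ler_pdivrMr //.
apply: (le_trans (claim n (leqnn n))).
rewrite ler_wpM2r // lerBlDl addrA.
exact: poly_bound.
Qed.
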